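(* Let $\Delta\ge 4$ and $n\ge \Delta+2$ be integers. Consider the linear program in the real variables $m_{i,j}$, $1\le i\le j\le \Delta$: \[ \max \sum_{1\le i\le j\le \Delta} (i-j)^2\, m_{i,j} \] subject to \[ \sum_{1\le i\le j\le \Delta} \Bigl(\frac{1}{i}+\frac{1}{j}\Bigr) m_{i,j} = n,\qquad \sum_{1\le i\le j\le \Delta} m_{i,j} = n-1,\qquad m_{i,j}\ge 0 \ \text{ for all } 1\le i\le j\le \Delta. \] Then this problem admits a unique optimal solution, namely \[ m_{1,\Delta}=\frac{(\Delta-2)n+(\Delta+2)}{\Delta},\qquad m_{2,\Delta}=\frac{2(n-\Delta-1)}{\Delta}, \] and $m_{i,j}=0$ for all $(i,j)\notin\{(1,\Delta),(2,\Delta)\}$.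
   Context: This linear program is the relaxation of maximizing the $\sigma$-irregularity $\sigma(T)=\sum_{uv\in E(T)}(d(u)-d(v))^2$ over trees $T$ of order $n$ and maximum degree $\Delta$, where $m_{i,j}$ stands for the number of edges joining a vertex of degree $i$ to a vertex of degree $j$. *)

(* Defs.v *)
From HB Require Import structures.
From mathcomp Require Import all_boot all_order all_algebra.
Set Implicit Arguments. Unset Strict Implicit. Unset Printing Implicit Defensive.
Import Order.TTheory GRing.Theory Num.Theory.
Local Open Scope ring_scope.

(* A candidate solution assigns a real m i j to each pair of degrees; only the
   pairs 1 <= i <= j <= D are meaningful (the LP variables m_{i,j}). *)

Definition lp_sum (R : realFieldType) (D : nat) (f : nat -> nat -> R) : R :=
  \sum_(1 <= i < D.+1) \sum_(i <= j < D.+1) f i j.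

Definition lp_objective (R : realFieldType) (D : nat) (m : nat -> nat -> R) : R :=
  lp_sum D (fun i j => (i%:R - j%:R) ^+ 2 * m i j).

Definition lp_feasible (R : realFieldType) (D n : nat) (m : nat -> nat -> R) : Prop :=
  [/\ lp_sum D (fun i j => ((i%:R)^-1 + (j%:R)^-1) * m i j) = n%:R,
      lp_sum D (fun i j => m i j) = n%:R - 1
    & forall i j : nat, (1 <= i)%N -> (i <= j)%N -> (j <= D)%N -> 0 <= m i j].

Definition lp_opt (R : realFieldType) (D n : nat) (i j : nat) : R :=
  if (i == 1%N) && (j == D) then
    ((D%:R - 2) * n%:R + (D%:R + 2)) / D%:R
  else if (i == 2%N) && (j == D) then
    2 * (n%:R - D%:R - 1) / D%:R
  else 0.

(* Main.v *)
Require Import Defs.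
From HB Require Import structures.
From mathcomp Require Import all_boot all_order all_algebra.
From mathcomp Require Import ring lra zify.
Import Order.TTheory GRing.Theory Num.Theory.
Local Open Scope ring_scope.

Set Implicit Arguments.
Section H.
Variable R : realFieldType.

Lemma lp_sum_ext D (F G : nat -> nat -> R) :
  (forall i j, (1 <= i)%N -> (i <= j)%N -> (j <= D)%N -> F i j = G i j) ->
  lp_sum D F = lp_sum D G.
Proof.
move=> H; rewrite /lp_sum big_nat_cond [RHS]big_nat_cond; apply: eq_bigr => i /andP[/andP[h1 h2] _].
rewrite big_nat_cond [RHS]big_nat_cond; apply: eq_bigr => j /andP[/andP[h3 h4] _].
by apply: H.
Qed.

Lemma lp_sum_lin D a b (F G H : nat -> nat -> R) :
  lp_sum D (fun i j => a * F i j + b * G i j - H i j) =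
  a * lp_sum D F + b * lp_sum D G - lp_sum D H.
Proof.
rewrite /lp_sum.
rewrite (eq_bigr (fun i => a * \sum_(i <= j < D.+1) F i j + b * \sum_(i <= j < D.+1) G i j - \sum_(i <= j < D.+1) H i j)); last first.
  by move=> i _; rewrite sumrB big_split /= -!mulr_sumr.
by rewrite sumrB big_split /= -!mulr_sumr.
Qed.

Lemma sum_nat_ge0 a b (F : nat -> R) :
  (forall k, (a <= k)%N -> (k < b)%N -> 0 <= F k) -> 0 <= \sum_(a <= k < b) F k.
Proof.
move=> H; rewrite big_nat_cond; apply: sumr_ge0 => k /andP[/andP[h1 h2] _]; exact: H.
Qed.

Lemma le_sum_term a b (F : nat -> R) k0 :
  (forall k, (a <= k)%N -> (k < b)%N -> 0 <= F k) -> (a <= k0)%N -> (k0 < b)%N ->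
  F k0 <= \sum_(a <= k < b) F k.
Proof.
move=> H h1 h2; rewrite (bigD1_seq k0) ?mem_index_iota ?h1 ?h2 ?iota_uniq //=.
rewrite lerDl big_seq_cond; apply: sumr_ge0 => k /andP[]; rewrite mem_index_iota => /andP[k1 k2] _.
exact: H.
Qed.

Lemma lp_sum_ge0 D (F : nat -> nat -> R) :
  (forall i j, (1 <= i)%N -> (i <= j)%N -> (j <= D)%N -> 0 <= F i j) -> 0 <= lp_sum D F.
Proof.
move=> H; apply: sum_nat_ge0 => i h1 h2; apply: sum_nat_ge0 => j h3 h4; exact: H.
Qed.

Lemma lp_sum_term D (F : nat -> nat -> R) i j :
  (forall i j, (1 <= i)%N -> (i <= j)%N -> (j <= D)%N -> 0 <= F i j) ->
  (1 <= i)%N -> (i <= j)%N -> (j <= D)%N -> F i j <= lp_sum D F.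
Proof.
move=> H h1 h2 h3; apply: le_trans (@le_sum_term _ _ _ i _ _ _); last 3 first.
- move=> k k1 k2; apply: sum_nat_ge0 => l l1 l2; apply: H => //.
- done.
- lia.
apply: le_sum_term => //; first (move=> l l1 l2; apply: H => //; lia).
Qed.

Lemma lp_sum_two D (F : nat -> nat -> R) : (3 <= D)%N ->
  (forall i j, (1 <= i)%N -> (i <= j)%N -> (j <= D)%N ->
     ~~ (((i == 1%N) || (i == 2%N)) && (j == D)) -> F i j = 0) ->
  lp_sum D F = F 1%N D + F 2%N D.
Proof.
move=> hD H; rewrite /lp_sum.
have inner : forall i, (1 <= i)%N -> (i <= D)%N -> \sum_(i <= j < D.+1) F i j = F i D.
  move=> i h1 h2; rewrite big_nat_recr //= big_nat_cond big1 ?add0r // => j /andP[/andP[j1 j2] _].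
  apply: H => //; [lia|]; apply/negP => /andP[_ /eqP]; lia.
rewrite big_nat_cond (eq_bigr (fun i => F i D)); last first.
  by move=> i /andP[/andP[h1 h2] _]; apply: inner; lia.
rewrite -big_nat_cond big_ltn; last lia.
rewrite big_ltn; last lia.
rewrite addrA big_nat_cond big1 ?addr0 // => i /andP[/andP[h1 h2] _].
apply: H; try lia; apply/negP => /andP[/orP[] /eqP] ; lia.
Qed.

Definition y1 (D : nat) : R := 4 * D%:R - 6.
Definition y2 (D : nat) : R := (D%:R - 1) ^+ 2 - y1 D - y1 D / D%:R.
Definition sl (D i j : nat) : R :=
  y1 D * ((i%:R)^-1 + (j%:R)^-1) + y2 D - (i%:R - j%:R) ^+ 2.

Lemma sl_id D i j : (1 <= i)%N -> (1 <= j)%N -> (1 <= D)%N ->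
  sl D i j = (i%:R - 1) * (i%:R - 2) * (2 * D%:R - i%:R - 3) / i%:R
    + (4 * D%:R - 6) * (D%:R - j%:R) / (j%:R * D%:R)
    + (D%:R - j%:R) * (D%:R + j%:R - 2 * i%:R) :> R.
Proof.
move=> hi hj hD.
have xi : (i%:R : R) != 0 by rewrite pnatr_eq0 -lt0n.
have xj : (j%:R : R) != 0 by rewrite pnatr_eq0 -lt0n.
have xd : (D%:R : R) != 0 by rewrite pnatr_eq0 -lt0n.
rewrite /sl /y2 /y1; field.
by rewrite xj xd.
Qed.

Lemma sl_ge0 D i j : (4 <= D)%N -> (1 <= i)%N -> (i <= j)%N -> (j <= D)%N ->
  0 <= sl D i j /\ (~~ (((i == 1%N) || (i == 2%N)) && (j == D)) -> 0 < sl D i j).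
Proof.
move=> hD h1 h2 h3.
rewrite sl_id //; try lia.
have xi : (1 <= (i%:R : R)) by rewrite ler1n.
have xij : ((i%:R : R) <= j%:R) by rewrite ler_nat.
have xjd : ((j%:R : R) <= D%:R) by rewrite ler_nat.
have xd : (4 <= (D%:R : R)) by rewrite (ler_nat R 4).
have xj0 : (0 < (j%:R : R)) by lra.
have xi0 : (0 < (i%:R : R)) by lra.
have B0 : 0 <= (4 * D%:R - 6) * (D%:R - j%:R) / (j%:R * D%:R) :> R.
  apply: divr_ge0; [apply: mulr_ge0; lra| apply: mulr_ge0; lra].
have C0 : 0 <= (D%:R - j%:R) * (D%:R + j%:R - 2 * i%:R) :> R by apply: mulr_ge0; lra.
have A0 : 0 <= (i%:R - 1) * (i%:R - 2) * (2 * D%:R - i%:R - 3) / i%:R :> R.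
  case: (ltnP i 3) => hi3.
    have -> : (i%:R - 1) * (i%:R - 2) = 0 :> R.
      by clear -h1 hi3; case: i h1 hi3 => [|[|[|]]] //= *; rewrite ?subrr ?mulr0 ?mul0r //; ring.
    by rewrite !mul0r.
  have xi3 : (3 <= (i%:R : R)) by rewrite (ler_nat R 3).
  apply: divr_ge0; last lra.
  apply: mulr_ge0; [apply: mulr_ge0|]; lra.
split; first by apply: addr_ge0 => //; apply: addr_ge0.
move=> Hn.
case: (ltnP j D) => hjD.
  have xjd' : ((j%:R : R) < D%:R) by rewrite ltr_nat.
  have B1 : 0 < (4 * D%:R - 6) * (D%:R - j%:R) / (j%:R * D%:R) :> R.
    apply: divr_gt0; [apply: mulr_gt0; lra| apply: mulr_gt0; lra].
  lra.
have hi3 : (3 <= i)%N.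
  move: Hn; have -> : j = D by lia.
  rewrite eqxx andbT; clear -h1; case: i h1 => [|[|[|]]] //.
have xi3 : (3 <= (i%:R : R)) by rewrite (ler_nat R 3).
have A1 : 0 < (i%:R - 1) * (i%:R - 2) * (2 * D%:R - i%:R - 3) / i%:R :> R.
  apply: divr_gt0; last lra.
  apply: mulr_gt0; [apply: mulr_gt0|]; lra.
lra.
Qed.

Lemma sl_1D D : (1 <= D)%N -> sl D 1 D = 0.
Proof.
move=> hD; have xd : (D%:R : R) != 0 by rewrite pnatr_eq0 -lt0n.
rewrite /sl /y2 /y1; field; done.
Qed.
Lemma sl_2D D : (1 <= D)%N -> sl D 2 D = 0.
Proof.
move=> hD; have xd : (D%:R : R) != 0 by rewrite pnatr_eq0 -lt0n.
rewrite /sl /y2 /y1; field; done.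
Qed.

Lemma L_eq D n (m : nat -> nat -> R) : lp_feasible D n m ->
  lp_sum D (fun i j => sl D i j * m i j) =
  y1 D * n%:R + y2 D * (n%:R - 1) - lp_objective D m.
Proof.
case=> e1 e2 _; rewrite -e2 -e1 /lp_objective -lp_sum_lin.
apply: lp_sum_ext => i j _ _ _; rewrite /sl; ring.
Qed.
End H.

Theorem theorem3p2 (R : realFieldType) (D n : nat) :
  (4 <= D)%N -> (D + 2 <= n)%N ->
  lp_feasible D n (lp_opt R D n) /\
  (forall m : nat -> nat -> R, lp_feasible D n m ->
     lp_objective D m <= lp_objective D (lp_opt R D n) /\
     (lp_objective D m = lp_objective D (lp_opt R D n) ->
        forall i j : nat, (1 <= i)%N -> (i <= j)%N -> (j <= D)%N ->
          m i j = lp_opt R D n i j)).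
Proof.
move=> hD hn.
have xd0 : (D%:R : R) != 0 by rewrite pnatr_eq0; lia.
have xd : (4 <= (D%:R : R)) by rewrite (ler_nat R 4).
have xn : ((D%:R : R) + 2 <= n%:R) by rewrite -(natrD R D 2) ler_nat.
have opt1 : lp_opt R D n 1 D = ((D%:R - 2) * n%:R + (D%:R + 2)) / D%:R.
  by rewrite /lp_opt !eqxx.
have opt2 : lp_opt R D n 2 D = 2 * (n%:R - D%:R - 1) / D%:R.
  by rewrite /lp_opt !eqxx.
have opt0 : forall i j, ~~ (((i == 1%N) || (i == 2%N)) && (j == D)) -> lp_opt R D n i j = 0.
  move=> i j; rewrite /lp_opt; case: (i == 1%N) => /=; case: (j == D) => //=;
  case: (i == 2%N) => //.
have feas : lp_feasible D n (lp_opt R D n).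
  split.
  - rewrite lp_sum_two; [|lia|]; last first.
      by move=> i j _ _ _ H; rewrite opt0 // mulr0.
    rewrite opt1 opt2; field; done.
  - rewrite lp_sum_two; [|lia|]; last first.
      by move=> i j _ _ _ H; rewrite opt0.
    rewrite opt1 opt2; field; done.
  - move=> i j h1 h2 h3.
    case E: (((i == 1%N) || (i == 2%N)) && (j == D)); last by rewrite opt0 ?E.
    case/andP: E => /orP[]/eqP -> /eqP ->; [rewrite opt1|rewrite opt2];
      apply: divr_ge0; nra.
have Lopt : lp_sum D (fun i j => sl R D i j * lp_opt R D n i j) = 0.
  rewrite lp_sum_two; [|lia|]; last first.
    by move=> i j _ _ _ H; rewrite opt0 // mulr0.
  by rewrite sl_1D ?sl_2D ?mul0r ?addr0 //; lia.
have objopt := L_eq feas; rewrite Lopt in objopt.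
split=> // m fm.
have Lm := L_eq fm.
have sm0 : forall i j, (1 <= i)%N -> (i <= j)%N -> (j <= D)%N -> 0 <= sl R D i j * m i j.
  move=> i j h1 h2 h3; case: fm => _ _ /(_ i j h1 h2 h3) hm.
  by apply: mulr_ge0 => //; case: (@sl_ge0 R D i j hD h1 h2 h3).
have L0 := @lp_sum_ge0 R D _ sm0.
split; first lra.
move=> Eobj.
have Lz : lp_sum D (fun i j => sl R D i j * m i j) = 0 by lra.
have mz : forall i j, (1 <= i)%N -> (i <= j)%N -> (j <= D)%N ->
   ~~ (((i == 1%N) || (i == 2%N)) && (j == D)) -> m i j = 0.
  move=> i j h1 h2 h3 H.
  have t := @lp_sum_term R D _ i j sm0 h1 h2 h3; rewrite Lz in t.
  have t0 := sm0 i j h1 h2 h3.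
  have [_ /(_ H) sp] := @sl_ge0 R D i j hD h1 h2 h3.
  case: fm => _ _ /(_ i j h1 h2 h3) hm.
  have : sl R D i j * m i j = 0 by apply/eqP; rewrite eq_le t t0.
  move/eqP; rewrite mulf_eq0 => /orP[/eqP|/eqP //]; lra.
case: fm => e1 e2 _.
rewrite lp_sum_two in e1; [|lia|]; last first.
  by move=> i j h1 h2 h3 H; rewrite mz // mulr0.
rewrite lp_sum_two in e2; [|lia|]; last by move=> i j h1 h2 h3 H; rewrite mz.
have m1E : m 1%N D = n%:R - 1 - m 2%N D by lra.
rewrite m1E in e1.
set t := (D%:R : R)^-1 in e1.
have h : (1 + t) * (n%:R - 1) - m 2%N D / 2 = n%:R.
  rewrite -[RHS]e1 /t; field; rewrite pnatr_eq0; lia.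
have m2E : m 2%N D = 2 * ((1 + t) * (n%:R - 1) - n%:R) by lra.
have m2E' : m 2%N D = lp_opt R D n 2 D by rewrite m2E opt2 /t; field.
have m1E' : m 1%N D = lp_opt R D n 1 D by rewrite m1E m2E' opt2 opt1; field.
move=> i j h1 h2 h3.
case E: (((i == 1%N) || (i == 2%N)) && (j == D)); last by rewrite opt0 ?E // mz ?E.
by case/andP: E => /orP[]/eqP -> /eqP ->.
Qed.
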